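(* Let $X$ be a non-negative continuous random variable with density $f$ satisfying $f(t) \le Ce^{-\lambda t}$ for all $t\ge0$, for some $C,\lambda>0$. Let $m \in (\chi_{\min},\chi_{\max})$ and $\mu = \min(\Pr[X\le m],\Pr[X\ge m])$ (so $\mu>0$). Let $Y$ be an $m$-reasonable random variable with density $g$. Then $g(t) \le \frac{C}{\mu}e^{-\lambda t}$ for all $t$, $\mathbb{E}[Y] \le \frac{C}{\mu\lambda}\cdot\frac{1}{\lambda}$, $\mathbb{E}[Y^2] \le \frac{C}{\mu\lambda}\cdot\frac{2}{\lambda^2}$, and $\Pr[Y\ge t] \le \frac{C}{\lambda\mu}e^{-\lambda t}$ for all $t \ge 0$.
   Context: $\chi_{\min} = \inf\{x:\Pr[X\ge x]>0\}$, $\chi_{\max} = \sup\{x:\Pr[X\le x]>0\}$. $X_{\le x}$ ($X_{\ge x}$) denotes $X$ conditioned on $X \le x$ ($X\ge x$). For $m\in(\chi_{\min},\chi_{\max})$, a random variable $Y$ is $m$-reasonable if either $Y = X_{\ge x}$ for some $x \le m$, or $Y = X_{\le x}$ for some $x\ge m$. *)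

(* Defs.v *)
From HB Require Import structures.
From mathcomp Require Import all_boot all_order all_algebra.
From mathcomp Require Import all_classical all_reals all_analysis.
Set Implicit Arguments. Unset Strict Implicit. Unset Printing Implicit Defensive.
Import Order.TTheory GRing.Theory Num.Theory.
Local Open Scope classical_set_scope.
Local Open Scope ring_scope.

Section defs.
Context (R : realType) (d : measure_display) (T : measurableType d)
  (P : probability T R).

Definition Pr (X : T -> R) (A : set R) : R := fine (P (X @^-1` A)).

Definition is_density (X : T -> R) (f : R -> R) : Prop :=
  [/\ measurable_fun setT f, (forall t, 0 <= f t), (forall t, t < 0 -> f t = 0)
    & forall A : set R, measurable A ->
        P (X @^-1` A) = (\int[lebesgue_measure]_(t in A) (f t)%:E)%E].

Definition chi_min (X : T -> R) : \bar R :=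
  ereal_inf [set x%:E | x in [set x : R | 0 < Pr X `]-oo, x]%classic]].
Definition chi_max (X : T -> R) : \bar R :=
  ereal_sup [set x%:E | x in [set x : R | 0 < Pr X `[x, +oo[%classic]].

Definition cond_set (upper : bool) (x : R) : set R :=
  if upper then `[x, +oo[%classic else `]-oo, x]%classic.

Definition cond_density (X : T -> R) (f : R -> R) (upper : bool) (x : R)
  : R -> R :=
  fun t => if t \in cond_set upper x then f t / Pr X (cond_set upper x) else 0.
End defs.

(* Y (on probability space Q) is distributed as X conditioned on
   X in cond_set upper x, i.e. Y = X_{>= x} (upper) or Y = X_{<= x}. *)
Definition is_conditioned (R : realType) (d : measure_display) (T : measurableType d)
  (P : probability T R) (X : T -> R)
  (d' : measure_display) (T' : measurableType d') (Q : probability T' R)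
  (Y : T' -> R) (upper : bool) (x : R) : Prop :=
  0 < Pr P X (cond_set upper x) /\
  forall A : set R, measurable A ->
    Pr Q Y A = Pr P X (A `&` cond_set upper x) / Pr P X (cond_set upper x).

Definition m_reasonable_via (R : realType) (d : measure_display) (T : measurableType d)
  (P : probability T R) (X : T -> R) (m : R)
  (d' : measure_display) (T' : measurableType d') (Q : probability T' R)
  (Y : T' -> R) (upper : bool) (x : R) : Prop :=
  (if upper then x <= m else m <= x) /\ is_conditioned P X Q Y upper x.

Definition m_reasonable (R : realType) (d : measure_display) (T : measurableType d)
  (P : probability T R) (X : T -> R) (m : R)
  (d' : measure_display) (T' : measurableType d') (Q : probability T' R)
  (Y : T' -> R) : Prop :=
  exists upper x, m_reasonable_via P X m Q Y upper x.

(* Main.v *)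
From HB Require Import structures.
From mathcomp Require Import all_boot all_order all_algebra.
From mathcomp Require Import all_classical all_reals all_analysis.
From mathcomp Require Import ring lra.
Require Import Defs.
Import Order.TTheory GRing.Theory Num.Theory.
Import numFieldNormedType.Exports.
Import measurable_realfun.
Local Open Scope classical_set_scope.
Local Open Scope ereal_scope.
Local Open Scope ring_scope.

Section S.
Context (R : realType).
Lemma dexp (lam k x : R) :
  is_derive x 1 (fun y => k * expR (- (lam * y))) (- (k * lam) * expR (- (lam * x))).
Proof.
apply: is_derive_eq.
rewrite /GRing.scale/= mulr1; ring.
Qed.

Lemma cont_exp (lam k : R) : continuous (fun y : R => k * expR (- (lam * y))).
Proof.
move=> y; apply: differentiable_continuous; apply/derivable1_diffP.
by case: (dexp lam k y).
Qed.

Lemma lim_exp (lam k : R) : 0 < lam -> (k * expR (- (lam * y))) @[y --> +oo] --> 0.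
Proof.
move=> l0.
rewrite -(mulr0 k); apply: cvgMr.
rewrite (_ : (fun x => expR (- (lam * x))) =
               (fun z => expR (- z)) \o (fun z => lam * z)); last by [].
apply: (@cvg_comp _ _ _ _ _ _ (pinfty_nbhs R)); last exact: cvgr_expR.
exact: gt0_cvgMry.
Qed.

Lemma int_exp (lam c a : R) : 0 < lam -> 0 <= c ->
  (\int[lebesgue_measure]_(x in `[a, +oo[) (c * expR (- (lam * x)))%:E =
   (c * expR (- (lam * a)) / lam)%:E)%E.
Proof.
move=> l0 c0.
rewrite (@ge0_continuous_FTC2y _ _ (fun y => (- (c / lam)) * expR (- (lam * y))) a 0).
- by rewrite sub0e -EFinN mulNr opprK mulrAC.
- by move=> x _; rewrite mulr_ge0 ?expR_ge0.
- by move=> x; apply: continuous_subspaceT; exact: cont_exp.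
- exact: lim_exp.
- by move=> x _; case: (dexp lam (- (c / lam)) x).
- by apply: cvg_at_right_filter; exact: cont_exp.
- move=> x _; rewrite derive1E (@derive_val _ _ _ _ _ _ _ (dexp lam (- (c / lam)) x)).
  have ln : lam != 0 by rewrite gt_eqF.
  by congr (_ * _); field.
Qed.
Lemma lim_xexp (lam : R) : 0 < lam -> (y * expR (- (lam * y))) @[y --> +oo] --> 0.
Proof.
move=> l0.
apply/cvgrPdist_le => e e0.
near=> s.
have s0 : 0 < s by near: s; exact: nbhs_pinfty_gt.
have hs : 2 / (e * lam ^+ 2) <= s by near: s; apply: nbhs_pinfty_ge; exact: num_real.
rewrite sub0r normrN ger0_norm ?mulr_ge0 ?expR_ge0 ?ltW//.
have he := @expR_ge1Dxn R (lam * s) 1 (ltW (mulr_gt0 l0 s0)).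
rewrite expRN ltr_pdivrMr ?expR_gt0//.
apply: (lt_le_trans _ (ler_wpM2l (ltW e0) he)).
have : 2 <= e * lam ^+ 2 * s by rewrite -ler_pdivrMl ?mulr_gt0 ?exprn_gt0.
have -> : (2`!)%:R = 2 :> R by [].
move=> h.
nra.
Unshelve. all: end_near. Qed.

Definition Hf (lam k : R) (y : R) :=
  (- (2 * k) / lam) * (y * expR (- (lam * y))) + (- (2 * k) / lam ^+ 2) * expR (- (lam * y)).

Lemma dH (lam k s : R) : 0 < lam ->
  is_derive s 1 (Hf lam k) (2 * k * s * expR (- (lam * s))).
Proof.
move=> l0; rewrite /Hf; apply: is_derive_eq.
rewrite /GRing.scale/= !mulr1.
have ln : lam != 0 by rewrite gt_eqF.
by field.
Qed.

Lemma lim_sqrt : (Num.sqrt r : R) @[r --> +oo] --> +oo.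
Proof.
apply/cvgryPge => A; near=> r.
have hr : A ^+ 2 <= r by near: r; apply: nbhs_pinfty_ge; exact: num_real.
apply: (le_trans (ler_norm A)).
by rewrite -sqrtr_sqr ler_wsqrtr.
Unshelve. all: end_near. Qed.

Lemma int_sqrt (lam k : R) : 0 < lam -> 0 <= k ->
  (\int[lebesgue_measure]_(x in `[0%R, +oo[) (k * expR (- (lam * Num.sqrt x)))%:E =
   (2 * k / lam ^+ 2)%:E)%E.
Proof.
move=> l0 k0.
have contH : continuous (Hf lam k).
  move=> y; apply: differentiable_continuous; apply/derivable1_diffP.
  by case: (dH lam k y l0).
have contF : continuous (Hf lam k \o Num.sqrt).
  by move=> y; apply: continuous_comp; [exact: sqrt_continuous | exact: contH].
rewrite (@ge0_continuous_FTC2y _ _ (Hf lam k \o Num.sqrt) 0 0).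
- rewrite sub0e -EFinN /= /Hf sqrtr0 !mulr0 oppr0 expR0 mul0r mulr0 add0r mulr1.
  by rewrite !mulNr opprK.
- by move=> x _; rewrite mulr_ge0 ?expR_ge0.
- move=> x; apply: continuous_subspaceT => y.
  apply: (@continuous_comp _ _ _ Num.sqrt (fun y => k * expR (- (lam * y)))).
    exact: sqrt_continuous.
  exact: cont_exp.
- apply: (cvg_comp _ _ lim_sqrt).
  rewrite -[0](addr0 0); apply: cvgD.
    by rewrite -(mulr0 (- (2 * k) / lam)); apply: cvgMr; exact: lim_xexp.
  exact: lim_exp.
- move=> x x0.
  by case: (is_derive1_comp (dH lam k (Num.sqrt x) l0) (is_derive1_sqrt x0)).
- by apply: cvg_at_right_filter; exact: contF.
- move=> x; rewrite in_itv/= andbT => x0.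
  rewrite derive1E (@derive_val _ _ _ _ _ _ _ (is_derive1_comp (dH lam k (Num.sqrt x) l0) (is_derive1_sqrt x0))).
  have sn : Num.sqrt x != 0 by rewrite gt_eqF ?sqrtr_gt0.
  by field; rewrite sn.
Qed.
End S.

Lemma eqle_ (R : realType) (a b : R) : a = b -> a <= b.
Proof. by move=> ->. Qed.

Section P.
Context (R : realType) (d : measure_display) (T : measurableType d) (P : probability T R).

Lemma PrE (X : {RV P >-> R}) (A : set R) : measurable A ->
  P (X @^-1` A) = (Pr P X A)%:E.
Proof.
move=> mA; rewrite /Pr fineK //; apply: fin_num_measure.
exact: measurable_funPTI.
Qed.

Lemma Pr_ge0 (X : {RV P >-> R}) (A : set R) : 0 <= Pr P X A.
Proof. by rewrite /Pr fine_ge0. Qed.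

Lemma Pr_le (X : {RV P >-> R}) (A B : set R) : measurable A -> measurable B ->
  A `<=` B -> Pr P X A <= Pr P X B.
Proof.
move=> mA mB AB; rewrite -lee_fin -!PrE //; apply: le_measure; rewrite ?inE.
- exact: measurable_funPTI.
- exact: measurable_funPTI.
- by move=> w /= /AB.
Qed.
End P.


Theorem lemma2 (R : realType) (d : measure_display) (T : measurableType d)
  (P : probability T R) (X : {RV P >-> R}) (f : R -> R) (C lam m : R)
  (d' : measure_display) (T' : measurableType d') (Q : probability T' R)
  (Y : {RV Q >-> R}) (upper : bool) (x : R) :
  (forall w, 0 <= X w) ->
  is_density P X f ->
  0 < C -> 0 < lam ->
  (forall t, 0 <= t -> f t <= C * expR (- (lam * t))) ->
  (chi_min P X < m%:E)%E -> (m%:E < chi_max P X)%E ->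
  m_reasonable_via P X m Q Y upper x ->
  let mu := Num.min (Pr P X `]-oo, m]%classic) (Pr P X `[m, +oo[%classic) in
  let g := cond_density P X f upper x in
  [/\ (forall t, g t <= C / mu * expR (- (lam * t))),
      ('E_Q[Y] <= (C / (mu * lam) * (1 / lam))%:E)%E,
      ('E_Q[(fun w => Y w ^+ 2)%R] <= (C / (mu * lam) * (2 / lam ^+ 2))%:E)%E
    & (forall t, 0 <= t -> Pr Q Y `[t, +oo[%classic <= C / (lam * mu) * expR (- (lam * t)))].
Proof.
move=> X0 [mf f0 fneg fint] C0 l0 fle hmin hmax [hx [pS hcond]] mu g.
set S := cond_set upper x.
set p := Pr P X S.
have mS : measurable S by rewrite /S /cond_set; destruct upper.
have mu1 : 0 < Pr P X `]-oo, m].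
  have [_ [z /= zpos <-] zm] := ereal_inf_lt hmin.
  apply: (lt_le_trans zpos); apply: Pr_le => //.
  by apply: subset_itvl; rewrite bnd_simp -lee_fin ltW.
have mu2 : 0 < Pr P X `[m, +oo[.
  have [_ [z /= zpos <-] zm] := ereal_sup_gt hmax.
  apply: (lt_le_trans zpos); apply: Pr_le => //.
  by apply: subset_itvr; rewrite bnd_simp -lee_fin ltW.
have mu0 : 0 < mu by rewrite /mu lt_min mu1 mu2.
have mup : mu <= p.
  rewrite /p /S /cond_set /mu; destruct upper.
  - rewrite ge_min; apply/orP; right; apply: Pr_le => //.
    by apply: subset_itvr; rewrite bnd_simp.
  - rewrite ge_min; apply/orP; left; apply: Pr_le => //.
    by apply: subset_itvl; rewrite bnd_simp.
have p0 : 0 < p by apply: lt_le_trans mup.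
have tail t : 0 <= t -> Pr Q Y `[t, +oo[ <= C / (lam * mu) * expR (- (lam * t)).
  move=> t0.
  rewrite hcond //.
  have h1 : Pr P X (`[t, +oo[ `&` S) <= C * expR (- (lam * t)) / lam.
    apply: (@le_trans _ _ (Pr P X `[t, +oo[)); first by apply: Pr_le; [apply: measurableI | | apply: subIsetl].
    rewrite -lee_fin -PrE // fint // -(@int_exp _ lam C t l0 (ltW C0)).

    apply: ge0_le_integral => //.
    - by move=> y _; rewrite lee_fin.
    - by apply/measurable_EFinP; exact: (measurable_funTS mf).
    - apply/measurable_EFinP; apply: measurable_funTS.
      by apply: continuous_measurable_fun; exact: cont_exp.
    - move=> y; rewrite /= in_itv /= andbT => ty; rewrite lee_fin fle //.
      exact: le_trans ty.
  rewrite ler_pdivrMr // (le_trans h1) //.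
  have -> : C * expR (- (lam * t)) / lam = C / (lam * mu) * expR (- (lam * t)) * mu.
    have ln : lam != 0 by rewrite gt_eqF.
    have mn : mu != 0 by rewrite gt_eqF.
    by field; rewrite mn ln.
  apply: ler_wpM2l => //.
  by rewrite mulr_ge0 ?expR_ge0 // divr_ge0 ?mulr_ge0 ?ltW.
have ln : lam != 0 by rewrite gt_eqF.
have mn : mu != 0 by rewrite gt_eqF.
have K0 : 0 <= C / (lam * mu) by rewrite divr_ge0 ?mulr_ge0 ?ltW.
have tailE t : 0 <= t -> (Q (Y @^-1` `[t, +oo[) <= (C / (lam * mu) * expR (- (lam * t)))%:E)%E.
  by move=> t0; rewrite PrE // lee_fin tail.
have mY : measurable_fun setT Y by exact: measurable_funP.
split.
- move=> t; rewrite /g /cond_density -/S -/p.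
  case: ifP => _; last by rewrite mulr_ge0 ?expR_ge0 // divr_ge0 // ltW.
  have [tn|tp] := ltP t 0.
    by rewrite fneg // mul0r mulr_ge0 ?expR_ge0 // divr_ge0 // ltW.
  rewrite ler_pdivrMr //; apply: (le_trans (fle _ tp)).
  have -> : C * expR (- (lam * t)) = C / mu * expR (- (lam * t)) * mu.
    by field; rewrite mn.
  by apply: ler_wpM2l => //; rewrite mulr_ge0 ?expR_ge0 // divr_ge0 // ltW.
- have mYp : measurable_fun setT (Y^\+)%R by exact: measurable_funrpos.
  pose Yp : {RV Q >-> R} := HB.pack (Y^\+)%R (isMeasurableFun.Build _ _ _ _ _ mYp).
  apply: (@le_trans _ _ 'E_Q[Yp]).
    rewrite !expectation_def integralE.
    apply: (@le_trans _ _ (\int[Q]_w ((EFin \o Y)^\+ w) - 0)%E).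
      apply: leeB => //; apply: integral_ge0 => w _; exact: funeneg_ge0.
    by rewrite sube0 funerpos.
  rewrite ge0_expectation_ccdf; last by move=> w; exact: funrpos_ge0.
  apply: (@le_trans _ _ (\int[lebesgue_measure]_(r in `[0%R, +oo[)
      (C / (lam * mu) * expR (- (lam * r)))%:E)%E).
    apply: ge0_le_integral => //.
    - by apply: measurable_funTS; exact: ccdf_measurable.
    - apply/measurable_EFinP; apply: measurable_funTS.
      by apply: continuous_measurable_fun; exact: cont_exp.
    - move=> r; rewrite /= in_itv /= andbT => r0.
      apply: le_trans (tailE r r0).
      rewrite /ccdf /distribution /pushforward.
      apply: le_measure; rewrite ?inE.
      + exact: measurable_funPTI.
      + exact: measurable_funPTI.
      + move=> w /=; rewrite !in_itv /= !andbT /funrpos lt_max => /orP[] h.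
          exact: ltW.
        by move: (le_lt_trans r0 h); rewrite ltxx.
  rewrite (@int_exp _ lam _ 0 l0 K0) mulr0 oppr0 expR0 mulr1 lee_fin.
  by apply: eqle_; field; rewrite mn ln.
- have mZ : measurable_fun setT (fun w => Y w ^+ 2) by exact: measurable_funX.
  pose Z : {RV Q >-> R} := HB.pack (fun w => Y w ^+ 2) (isMeasurableFun.Build _ _ _ _ _ mZ).
  have -> : 'E_Q[fun w => Y w ^+ 2] = 'E_Q[Z] by [].
  rewrite ge0_expectation_ccdf; last by move=> w; exact: sqr_ge0.
  have Yneg : Q (Y @^-1` `]-oo, 0%R[) = 0%E.
    rewrite PrE // hcond //.
    rewrite /Pr (_ : X @^-1` _ = set0) ?measure0 ?mul0r //.
    apply/seteqP; split => // w /= [].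
    by rewrite in_itv /= ltNge X0.
  apply: (@le_trans _ _ (\int[lebesgue_measure]_(r in `[0%R, +oo[)
      (C / (lam * mu) * expR (- (lam * Num.sqrt r)))%:E)%E).
    apply: ge0_le_integral => //.
    - by apply: measurable_funTS; exact: ccdf_measurable.
    - apply/measurable_EFinP; apply: measurable_funTS.
      apply: continuous_measurable_fun => y.
      apply: (@continuous_comp _ _ _ Num.sqrt (fun y => C / (lam * mu) * expR (- (lam * y)))).
        exact: sqrt_continuous.
      exact: cont_exp.
    - move=> r; rewrite /= in_itv /= andbT => r0.
      have := tailE (Num.sqrt r) (sqrtr_ge0 r).
      apply: le_trans.
      rewrite /ccdf /distribution /pushforward.
      apply: (@le_trans _ _ (Q (Y @^-1` `[Num.sqrt r, +oo[ `|` Y @^-1` `]-oo, 0[))).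
        apply: le_measure; rewrite ?inE.
        + exact: measurable_funPTI.
        + by apply: measurableU; exact: measurable_funPTI.
        + move=> w /=; rewrite !in_itv /= andbT => h.
          have [yn|yp] := ltP (Y w) 0; first by right.
          left; rewrite andbT.
          by rewrite -[X in _ <= X](ger0_norm yp) -sqrtr_sqr ler_wsqrtr // ltW.
      apply: (le_trans (measureU2 _ _ _)).
      + exact: measurable_funPTI.
      + exact: measurable_funPTI.
      rewrite -[leRHS]adde0; apply: leeD => //.
      by rewrite le_eqVlt; apply/orP; left; apply/eqP; exact: Yneg.
  rewrite (@int_sqrt _ lam _ l0 K0) lee_fin.
  by apply: eqle_; field; rewrite mn ln.
- exact: tail.
Qed.
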